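(* The discrete self-adjoint Dirac system $y_{k+1}(z)=(I_m+\mathrm{i} z j C_k)y_k(z)$ $(k\in\mathbb{N}_0)$, whose potential satisfies $C_k>0$, $C_k j C_k=j$, is uniquely recovered (i.e., the sequence $\{C_k\}$ is uniquely determined) from its Weyl function $\varphi(z)$, $z\in\mathbb{C}_-$.
   Context: Let $j=\mathrm{diag}\{I_{m_1},-I_{m_2}\}$ with $m_1+m_2=m$, $m_1,m_2\neq 0$. Consider the discrete self-adjoint Dirac system $y_{k+1}(z)=(I_m+\mathrm{i} z j C_k)y_k(z)$, $k\in\mathbb{N}_0$, where the $m\times m$ matrices $C_k$ satisfy $C_k>0$ and $C_k j C_k=j$. Let $\{W_k(z)\}$ be its fundamental solution normalized by $W_0(z)=I_m$, and let $q(z)=(1+|z|^2)^{-1}$. The Weyl function of the system is the $m_1\times m_2$ matrix function $\varphi(z)$ on the lower half-plane $\mathbb{C}_-$ such that $\sum_{k=0}^\infty q(z)^k \begin{bmatrix}\varphi(z)^* & I_{m_2}\end{bmatrix} W_k(z)^* C_k W_k(z)\begin{bmatrix}\varphi(z)\\ I_{m_2}\end{bmatrix}<\infty$ for $z\in\mathbb{C}_-$. (Such a Weyl function exists, is unique, and is analytic and contractive on $\mathbb{C}_-$.) *)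

(* Defs.v *)
From HB Require Import structures.
From mathcomp Require Import all_boot all_order all_algebra.
From mathcomp Require Import complex.
From mathcomp Require Import reals.
Set Implicit Arguments. Unset Strict Implicit. Unset Printing Implicit Defensive.
Import Order.TTheory GRing.Theory Num.Theory.
Local Open Scope ring_scope.
Local Open Scope complex_scope.

Section Dirac.
Variable R : realType.
Local Notation C := R[i].

Definition adj {m n : nat} (A : 'M[C]_(m, n)) : 'M[C]_(n, m) :=
  (map_mx Num.conj A)^T.

Definition posdef {m : nat} (A : 'M[C]_m) : Prop :=
  adj A = A /\ forall v : 'cV[C]_m, v != 0 -> 0 < (adj v *m A *m v) 0 0.

Definition jmat (m1 m2 : nat) : 'M[C]_(m1 + m2) :=
  block_mx 1%:M 0 0 (- 1%:M).

Definition dirac_potential (m1 m2 : nat) (Cs : nat -> 'M[C]_(m1 + m2)) : Prop :=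
  forall k, posdef (Cs k) /\ Cs k *m jmat m1 m2 *m Cs k = jmat m1 m2.

Fixpoint fundW (m1 m2 : nat) (Cs : nat -> 'M[C]_(m1 + m2)) (z : C) (k : nat)
  : 'M[C]_(m1 + m2) :=
  match k with
  | 0 => 1%:M
  | k'.+1 => (1%:M + ('i * z) *: (jmat m1 m2 *m Cs k')) *m fundW Cs z k'
  end.

Definition qfun (z : C) : C := (1 + `|z| ^+ 2)^-1.

Definition weyl_term (m1 m2 : nat) (Cs : nat -> 'M[C]_(m1 + m2))
  (phi : 'M[C]_(m1, m2)) (z : C) (k : nat) : 'M[C]_m2 :=
  qfun z ^+ k *: (adj (col_mx phi 1%:M) *m adj (fundW Cs z k) *m Cs k
                   *m fundW Cs z k *m col_mx phi 1%:M).

(* the series of positive semidefinite matrices is finite: partial sums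
   are bounded (equivalently, their traces are bounded) *)
Definition weyl_summable (m1 m2 : nat) (Cs : nat -> 'M[C]_(m1 + m2))
  (phi : 'M[C]_(m1, m2)) (z : C) : Prop :=
  exists B : R, forall N : nat,
    \tr (\sum_(k < N) weyl_term Cs phi z k) <= B%:C.

Definition is_weyl_function (m1 m2 : nat) (Cs : nat -> 'M[C]_(m1 + m2))
  (phi : C -> 'M[C]_(m1, m2)) : Prop :=
  forall z : C, complex.Im z < 0 -> weyl_summable Cs (phi z) z.

End Dirac.

(* Main.v *)
Require Import Defs.
From HB Require Import structures.
From mathcomp Require Import all_boot all_order all_algebra.
From mathcomp Require Import complex.
From mathcomp Require Import reals.
From mathcomp Require Import ring lra.
Set Implicit Arguments. Unset Strict Implicit. Unset Printing Implicit Defensive.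
Import Order.TTheory GRing.Theory Num.Theory.
Local Open Scope ring_scope.
Local Open Scope complex_scope.

Section Aux.
Variable R : realType.

Lemma rl1 (a b : R) : 0 <= 2%:R * a + (- 2%:R) * b -> b <= a.
Proof. lra. Qed.
Lemma rl2 (a b : R) : a <= b -> 2 * a <= a + b.
Proof. lra. Qed.
Lemma rl3 (a b : R) : 0 <= a -> - b <= a - b.
Proof. lra. Qed.
Lemma rl5 (c K s n0 E : R) : 0 < K -> c * K = 2 * s -> K = 1 + s ^+ 2 ->
  2 * c * n0 <= (1 - c) * E -> 4 * s * n0 <= (1 - s) ^+ 2 * E.
Proof.
move=> K0 hc hK h.
have := ler_wpM2l (ltW K0) h.
have -> : K * (2 * c * n0) = 2 * (c * K) * n0 by ring.
have -> : K * ((1 - c) * E) = (K - c * K) * E by ring.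
rewrite hc hK.
have -> : (1 + s ^+ 2 - 2 * s) = (1 - s) ^+ 2 by ring.
have -> : 2 * (2 * s) * n0 = 4 * s * n0 by ring.
done.
Qed.
Lemma rl6 (s N n0 n1 X : R) : 0 < s -> N <= 2 * n1 + 2 * n0 ->
  4 * s * n0 <= X -> 4 * s * n1 <= X -> s * N <= X.
Proof.
move=> s0 h h0 h1; have := ler_wpM2l (ltW s0) h.
have -> : s * (2 * n1 + 2 * n0) = (4 * s * n1 + 4 * s * n0) / 2 by field.
move=> h2; apply: le_trans h2 _; rewrite ler_pdivrMr //; lra.
Qed.
Lemma rl7 (s : R) : 0 < 1 + s ^+ 2.
Proof. have := sqr_ge0 s; lra. Qed.
Lemma rl4 (A B nx nY c : R) : 0 <= c -> c <= 1 -> 2 * nx <= A + B -> - nY <= A ->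
  A + c * B <= 0 -> 2 * c * nx <= (1 - c) * nY.
Proof.
move=> c0 c1 h1 h2 h3.
have e1 : 0 <= c * (A + B - 2 * nx) by apply: mulr_ge0 => //; lra.
have e2 : 0 <= (1 - c) * (A + nY) by apply: mulr_ge0; lra.
nra.
Qed.

Local Notation C := R[i].

Lemma conjE (x : C) : Num.conj x = conjc x. Proof. by []. Qed.

Lemma adjK m n (A : 'M[C]_(m,n)) : adj (adj A) = A.
Proof. by apply/matrixP=> i j; rewrite !mxE conjCK. Qed.

Lemma adjM m n p (A : 'M[C]_(m,n)) (B : 'M[C]_(n,p)) : adj (A *m B) = adj B *m adj A.
Proof. by rewrite /adj map_mxM trmx_mul. Qed.

Lemma adjD m n (A B : 'M[C]_(m,n)) : adj (A + B) = adj A + adj B.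
Proof. by apply/matrixP=> i j; rewrite !mxE rmorphD. Qed.

Lemma adjN m n (A : 'M[C]_(m,n)) : adj (- A) = - adj A.
Proof. by apply/matrixP=> i j; rewrite !mxE rmorphN. Qed.

Lemma adjB m n (A B : 'M[C]_(m,n)) : adj (A - B) = adj A - adj B.
Proof. by rewrite adjD adjN. Qed.

Lemma adj0 m n : adj (0 : 'M[C]_(m,n)) = 0.
Proof. by apply/matrixP=> i j; rewrite !mxE rmorph0. Qed.

Lemma adjZ m n a (A : 'M[C]_(m,n)) : adj (a *: A) = Num.conj a *: adj A.
Proof. by apply/matrixP=> i j; rewrite !mxE rmorphM. Qed.

Lemma adj1 n : adj (1%:M : 'M[C]_n) = 1%:M.
Proof. by rewrite /adj map_mx1 trmx1. Qed.

Lemma adj_col m1 m2 n (A : 'M[C]_(m1,n)) (B : 'M[C]_(m2,n)) :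
  adj (col_mx A B) = row_mx (adj A) (adj B).
Proof. by rewrite /adj map_col_mx tr_col_mx. Qed.

Lemma adj_block m1 m2 n1 n2 (a : 'M[C]_(m1,n1)) b (c : 'M[C]_(m2,n1)) (d : 'M[C]_(m2,n2)) :
  adj (block_mx a b c d) = block_mx (adj a) (adj c) (adj b) (adj d).
Proof. by rewrite /adj map_block_mx tr_block_mx. Qed.

Definition qf n (M : 'M[C]_n) (x : 'cV[C]_n) : R := complex.Re ((adj x *m M *m x) 0 0).
Definition nrm2 n (x : 'cV[C]_n) : R := complex.Re ((adj x *m x) 0 0).

Lemma nrm2E n (x : 'cV[C]_n) : nrm2 x = \sum_i (complex.Re (x i 0) ^+ 2 + complex.Im (x i 0) ^+ 2).
Proof.
rewrite /nrm2 mxE raddf_sum; apply: eq_bigr => i _.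
rewrite !mxE conjE; case: (x i 0) => a b /=; ring.
Qed.

Lemma nrm2_ge0 n (x : 'cV[C]_n) : 0 <= nrm2 x.
Proof. by rewrite nrm2E; apply: sumr_ge0 => i _; rewrite addr_ge0 ?sqr_ge0. Qed.

Lemma nrm2_eq0 n (x : 'cV[C]_n) : nrm2 x <= 0 -> x = 0.
Proof.
rewrite nrm2E => h.
have h0 : \sum_i (complex.Re (x i 0) ^+ 2 + complex.Im (x i 0) ^+ 2) = 0.
  by apply/eqP; rewrite eq_le h sumr_ge0 // => i _; rewrite addr_ge0 ?sqr_ge0.
apply/matrixP=> i j; rewrite (ord1 j) mxE.
have := psumr_eq0P (fun i _ => addr_ge0 (sqr_ge0 (complex.Re (x i 0))) (sqr_ge0 (complex.Im (x i 0)))) h0.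
move=> /(_ i isT) /eqP; rewrite paddr_eq0 ?sqr_ge0 // !sqrf_eq0 => /andP[/eqP a /eqP b].
by case: (x i 0) a b => ? ? /= -> ->.
Qed.


Variables m1 m2 : nat.
Local Notation n := (m1 + m2)%N.
Local Notation J := (jmat R m1 m2).

Lemma JJ : J *m J = 1%:M.
Proof.
rewrite /jmat mulmx_block !mulmx0 !mul0mx !addr0 !add0r mulmx1 mulNmx mulmxN mul1mx opprK.
by rewrite -scalar_mx_block.
Qed.

Lemma adjJ : adj J = J.
Proof. by rewrite /jmat adj_block !adj0 adjN !adj1. Qed.

Definition Amat (Ck : 'M[C]_n) (z : C) : 'M[C]_n := 1%:M + ('i * z) *: (J *m Ck).

Lemma fundWS Cs z k : fundW Cs z k.+1 = Amat (Cs k) z *m fundW Cs z k.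
Proof. by []. Qed.

Lemma fundW0 Cs z : fundW Cs z 0 = 1%:M :> 'M[C]_n.
Proof. by []. Qed.

Lemma e1_aux (z : C) : (1 + complex.Re z ^+ 2 + complex.Im z ^+ 2)%:C = 1 + Num.conj ('i * z) * ('i * z).
Proof. rewrite conjE; case: z => x y /=; apply/eqP; rewrite eq_complex /=; apply/andP; split; apply/eqP; ring. Qed.
Lemma e2_aux (z : C) : (- 2 * complex.Im z)%:C = ('i * z) + Num.conj ('i * z).
Proof. rewrite conjE; case: z => x y /=; apply/eqP; rewrite eq_complex /=; apply/andP; split; apply/eqP; ring. Qed.

Lemma AJA (Ck : 'M[C]_n) z : adj Ck = Ck -> Ck *m J *m Ck = J ->
  adj (Amat Ck z) *m J *m Amat Ck z =
  ((1 + complex.Re z ^+ 2 + complex.Im z ^+ 2)%:C) *: J + ((- 2 * complex.Im z)%:C) *: Ck.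
Proof.
move=> hH hJ.
rewrite e1_aux e2_aux /Amat adjD adj1 adjZ adjM adjJ hH.
set a := 'i * z; set b := Num.conj a.
have h1 : (1%:M + b *: (Ck *m J)) *m J = J + b *: Ck.
  by rewrite mulmxDl mul1mx -scalemxAl -mulmxA JJ mulmx1.
rewrite h1 mulmxDl !mulmxDr !mulmx1 -!scalemxAl -!scalemxAr mulmxA JJ mul1mx mulmxA hJ.
rewrite !scalerDl scale1r scalerA.
by rewrite [b *: Ck + _]addrC addrACA.
Qed.


Lemma ReM_real (r : R) (y : C) : complex.Re (r%:C * y) = r * complex.Re y.
Proof. by case: y => a b /=; ring. Qed.

Lemma qf_adj k p (M : 'M[C]_k) (A : 'M[C]_(k,p)) x : qf (adj A *m M *m A) x = qf M (A *m x).
Proof. by rewrite /qf adjM !mulmxA. Qed.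

Lemma qfD k (M N : 'M[C]_k) x : qf (M + N) x = qf M x + qf N x.
Proof. by rewrite /qf mulmxDr mulmxDl mxE raddfD. Qed.

Lemma qfZ k (r : R) (M : 'M[C]_k) x : qf (r%:C *: M) x = r * qf M x.
Proof. by rewrite /qf -scalemxAr -scalemxAl mxE ReM_real. Qed.

Lemma qf1 k (x : 'cV[C]_k) : qf 1%:M x = nrm2 x.
Proof. by rewrite /qf mulmx1. Qed.

Lemma qf0 k (M : 'M[C]_k) : qf M 0 = 0.
Proof. by rewrite /qf mulmx0 mxE. Qed.

Lemma entryD p q (A B : 'M[C]_(p,q)) i j : (A + B) i j = A i j + B i j.
Proof. by rewrite mxE. Qed.
Lemma entryN p q (A : 'M[C]_(p,q)) i j : (- A) i j = - A i j.
Proof. by rewrite mxE. Qed.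
Lemma ReD (x y : C) : complex.Re (x + y) = complex.Re x + complex.Re y.
Proof. by case: x; case: y. Qed.
Lemma ReN' (x : C) : complex.Re (- x) = - complex.Re x.
Proof. by case: x. Qed.

Lemma qf_par k (M : 'M[C]_k) x y : qf M (x + y) + qf M (x - y) = 2 * qf M x + 2 * qf M y.
Proof.
rewrite /qf adjD adjB !mulmxDl !mulmxDr !mulmxN !mulNmx ?opprK.
move: (adj x *m M *m x) (adj x *m M *m y) (adj y *m M *m x) (adj y *m M *m y) => a b c d.
rewrite !(entryD, entryN, ReD, ReN'); ring.
Qed.

Lemma qf_scale k (M : 'M[C]_k) a x :
  qf M (a *: x) = (complex.Re a ^+ 2 + complex.Im a ^+ 2) * qf M x.
Proof.
rewrite /qf adjZ -!scalemxAl -!scalemxAr scalerA mxE.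
have -> : Num.conj a * a = (complex.Re a ^+ 2 + complex.Im a ^+ 2)%:C.
  rewrite conjE; case: a => u v /=; apply/eqP; rewrite eq_complex /=; apply/andP; split; apply/eqP; ring.
by rewrite ReM_real.
Qed.

Lemma qf_posdef k (M : 'M[C]_k) x : posdef M -> 0 <= qf M x.
Proof.
move=> [_ hM]; have [->|nz] := eqVneq x 0; first by rewrite qf0.
by move: (hM x nz); rewrite ltcE => /andP[_ h]; apply: ltW.
Qed.

Lemma qf_posdef_gt0 k (M : 'M[C]_k) x : posdef M -> x != 0 -> 0 < qf M x.
Proof. by move=> [_ hM] nz; move: (hM x nz); rewrite ltcE => /andP[_ h]. Qed.

Lemma qfJ (x : 'cV[C]_m1) (y : 'cV[C]_m2) : qf J (col_mx x y) = nrm2 x - nrm2 y.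
Proof.
rewrite /qf adj_col /jmat mul_row_block !mulmx0 !addr0 !add0r !mulmx1 mulmxN.
rewrite mul_row_col mxE raddfD /= mulNmx.
have -> : (- (adj y *m 1%:M *m y)) 0 0 = - (adj y *m y) 0 0 by rewrite mulmx1 mxE.
by rewrite /nrm2; case: ((adj y *m y) 0 0).
Qed.

Definition qr (z : C) : R := (1 + complex.Re z ^+ 2 + complex.Im z ^+ 2)^-1.

Lemma qr_gt0 z : 0 < qr z.
Proof. by rewrite /qr invr_gt0; apply: ltr_wpDr; [rewrite sqr_ge0|apply: ltr_wpDr; [rewrite sqr_ge0|rewrite ltr01]]. Qed.

Lemma qrK z : qr z * (1 + complex.Re z ^+ 2 + complex.Im z ^+ 2) = 1.
Proof. rewrite mulVf //; apply: lt0r_neq0; rewrite -invr_gt0; exact: qr_gt0. Qed.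

Lemma qfunE z : qfun z = (qr z)%:C.
Proof.
rewrite /qfun /qr -add_Re2_Im2 fmorphV /= rmorphD /=; congr (_^-1).
by apply/eqP; rewrite eq_complex /= !addr0 addrA !eqxx.
Qed.

Lemma CgeJ (Ck : 'M[C]_n) u : posdef Ck -> Ck *m J *m Ck = J -> qf J u <= qf Ck u.
Proof.
move=> hP hJ; have hH := hP.1.
set Q := 1%:M - J *m Ck.
have hQ : adj Q *m Ck *m Q = (2%:R : R)%:C *: Ck + (- 2%:R : R)%:C *: J.
  rewrite /Q adjB adj1 adjM adjJ hH.
  have -> : (1%:M - Ck *m J) *m Ck = Ck - J by rewrite mulmxBl mul1mx hJ.
  rewrite mulmxBr mulmx1 mulmxBl mulmxA hJ mulmxA JJ mul1mx.
  rewrite rmorphN /= rmorph_nat scaleNr !scaler_nat.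
  by apply/matrixP=> i j; rewrite !mxE; ring.
apply: rl1; have := qf_posdef (Q *m u) hP; by rewrite -qf_adj hQ qfD !qfZ.
Qed.

Definition tt Cs z (w : 'cV[C]_n) k : R := qr z ^+ k * qf J (fundW Cs z k *m w).
Definition ss Cs z (w : 'cV[C]_n) k : R := qr z ^+ k * qf (Cs k) (fundW Cs z k *m w).
Definition cc (z : C) : R := - 2 * complex.Im z * qr z.

Lemma tt_step Cs z w k : adj (Cs k) = Cs k -> Cs k *m J *m Cs k = J ->
  tt Cs z w k.+1 = tt Cs z w k + cc z * ss Cs z w k.
Proof.
move=> hH hJ; rewrite /tt /ss /cc fundWS -mulmxA -qf_adj AJA // qfD !qfZ exprS.
have hq := qrK z.
set s := (1 + _ + _) in hq *; set a := qf J _; set b := qf (Cs k) _.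
rewrite -[qr z ^+ k * a]mulr1 -hq; ring.
Qed.

Lemma tt_le_ss Cs z w k : posdef (Cs k) -> Cs k *m J *m Cs k = J -> tt Cs z w k <= ss Cs z w k.
Proof.
move=> hP hJ; rewrite /tt /ss; apply: ler_wpM2l; first by rewrite exprn_ge0 // ltW // qr_gt0.
exact: CgeJ.
Qed.

Lemma cc_gt0 z : complex.Im z < 0 -> 0 < cc z.
Proof. move=> h; rewrite /cc; apply: mulr_gt0; [nra | exact: qr_gt0]. Qed.

End Aux.

Lemma growth (R : realType) (t s : nat -> R) (c B : R) : 0 < c ->
  (forall k, t k.+1 = t k + c * s k) -> (forall k, t k <= s k) ->
  (forall N, \sum_(k < N) s k <= B) -> forall N, t N <= 0.
Proof.
move=> c0 hst hts hB.
have tsum : forall N, t N = t 0%N + c * \sum_(k < N) s k.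
  elim=> [|N IH]; first by rewrite big_ord0 mulr0 addr0.
  by rewrite hst IH big_ord_recr /= mulrDr addrA.
have tU : forall N, t N <= t 0%N + c * B.
  by move=> N; rewrite tsum lerD2l ler_wpM2l // ltW.
move=> M; rewrite leNgt; apply/negP => tM.
have claim : forall k, t M + k%:R * (c * t M) <= t (M + k)%N.
  elim=> [|k IH]; first by rewrite mul0r addr0 addn0.
  rewrite addnS hst.
  have h1 : t M <= t (M + k)%N.
    apply: le_trans IH; rewrite lerDl; apply: mulr_ge0; [exact: ler0n | by apply: mulr_ge0; apply: ltW].
  have h2 : c * t M <= c * s (M + k)%N.
    by apply: ler_wpM2l; [apply: ltW | apply: le_trans (hts _)].
  rewrite -natr1 mulrDl mul1r addrA; exact: lerD.
set y := `|(t 0%N + c * B - t M) / (c * t M)|.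
have hy := archi_boundP (normr_ge0 ((t 0%N + c * B - t M) / (c * t M))).
set k := Num.Def.archi_bound _ in hy.
have ct : 0 < c * t M by apply: mulr_gt0.
have : (t 0%N + c * B - t M) / (c * t M) < k%:R by apply: le_lt_trans hy; apply: ler_norm.
rewrite ltr_pdivrMr // => hk.
have := le_trans (claim k) (tU (M + k)%N); lra.
Qed.

Section Main.
Variable R : realType.
Local Notation C := R[i].
Variables m1 m2 : nat.
Local Notation n := (m1 + m2)%N.
Local Notation J := (jmat R m1 m2).

Definition Disc (Cs : nat -> 'M[C]_n) z (Phi : 'M[C]_(n, m2)) :=
  forall v N, tt Cs z (Phi *m v) N <= 0.

Lemma ss_ge0 (Cs : nat -> 'M[C]_n) z w k : posdef (Cs k) -> 0 <= ss Cs z w k.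
Proof.
move=> hP; rewrite /ss; apply: mulr_ge0; last exact: qf_posdef.
by apply: exprn_ge0; apply: ltW; apply: qr_gt0.
Qed.

Lemma bounded_disc (Cs : nat -> 'M[C]_n) z w : dirac_potential Cs -> complex.Im z < 0 ->
  (exists B, forall N, \sum_(k < N) ss Cs z w k <= B) -> forall N, tt Cs z w N <= 0.
Proof.
move=> hC hz [B hB].
apply: (@growth R (tt Cs z w) (ss Cs z w) (cc z) B (cc_gt0 hz)) => //.
- by move=> k; have [hP hJ] := hC k; apply: tt_step => //; case: hP.
- by move=> k; have [hP hJ] := hC k; apply: tt_le_ss.
Qed.

Lemma fundW_shift (Cs : nat -> 'M[C]_n) z k :
  fundW Cs z k.+1 = fundW (fun k => Cs k.+1) z k *m Amat (Cs 0%N) z.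
Proof.
elim: k => [|k IH]; first by rewrite fundWS fundW0 mulmx1 mul1mx.
by rewrite fundWS IH mulmxA.
Qed.

Lemma tt_shift (Cs : nat -> 'M[C]_n) z w N :
  tt Cs z w N.+1 = qr z * tt (fun k => Cs k.+1) z (Amat (Cs 0%N) z *m w) N.
Proof. by rewrite /tt fundW_shift -mulmxA exprS mulrA. Qed.

Lemma Disc_shift (Cs : nat -> 'M[C]_n) z Phi : Disc Cs z Phi ->
  Disc (fun k => Cs k.+1) z (Amat (Cs 0%N) z *m Phi).
Proof.
move=> hD v N; have := hD v N.+1; rewrite tt_shift -mulmxA.
by rewrite pmulr_rle0 // qr_gt0.
Qed.

Lemma sum_bound k (F : nat -> 'cV[C]_k -> R) :
  (forall N x y, F N (x + y) <= 2 * F N x + 2 * F N y) ->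
  (forall N a x, F N (a *: x) = (complex.Re a ^+ 2 + complex.Im a ^+ 2) * F N x) ->
  forall p (y : 'I_p -> 'cV[C]_k) (a : 'I_p -> C),
  (forall i, exists B, forall N, F N (y i) <= B) ->
  exists B, forall N, F N (\sum_i a i *: y i) <= B.
Proof.
move=> hpar hsc; elim=> [|p IH] y a hy.
  exists 0 => N; rewrite big_ord0 -(scale0r (0 : 'cV[C]_k)) hsc /=; lra.
have [B1 hB1] := IH (fun i => y (widen_ord (leqnSn p) i)) (fun i => a (widen_ord (leqnSn p) i))
   (fun i => hy _).
have [B2 hB2] := hy ord_max.
exists (2 * B1 + 2 * ((complex.Re (a ord_max) ^+ 2 + complex.Im (a ord_max) ^+ 2) * B2)) => N.
rewrite big_ord_recr /=; apply: le_trans (hpar _ _ _) _; rewrite hsc.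
apply: lerD; first by apply: ler_wpM2l => //.
apply: ler_wpM2l => //; apply: ler_wpM2l => //; by rewrite addr_ge0 ?sqr_ge0.
Qed.


Lemma adj_delta p (i : 'I_p) : adj (delta_mx i 0 : 'cV[C]_p) = delta_mx 0 i.
Proof. by apply/matrixP=> a b; rewrite !mxE rmorph_nat andbC. Qed.

Lemma diag_entry p k (A : 'M[C]_(k, p)) (M : 'M[C]_k) i :
  (adj A *m M *m A) i i = (adj (A *m (delta_mx i 0 : 'cV[C]_p)) *m M *m (A *m (delta_mx i 0 : 'cV[C]_p))) 0 0.
Proof.
rewrite adjM adj_delta.
have -> : (delta_mx 0 i : 'rV[C]_p) *m adj A *m M *m (A *m delta_mx i 0) =
   (delta_mx 0 i : 'rV[C]_p) *m (adj A *m M *m A) *m (delta_mx i 0 : 'cV[C]_p) by rewrite !mulmxA.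
by rewrite -rowE -colE !mxE.
Qed.

Lemma ss_par (Cs : nat -> 'M[C]_n) z x y k :
  ss Cs z (x + y) k + ss Cs z (x - y) k = 2 * ss Cs z x k + 2 * ss Cs z y k.
Proof.
by rewrite /ss mulmxDr mulmxBr -mulrDr qf_par; ring.
Qed.

Lemma ss_scale (Cs : nat -> 'M[C]_n) z a x k :
  ss Cs z (a *: x) k = (complex.Re a ^+ 2 + complex.Im a ^+ 2) * ss Cs z x k.
Proof. by rewrite /ss -scalemxAr qf_scale; ring. Qed.

Lemma top_disc (Cs : nat -> 'M[C]_n) (phi : C -> 'M[C]_(m1, m2)) z :
  dirac_potential Cs -> is_weyl_function Cs phi -> complex.Im z < 0 ->
  Disc Cs z (col_mx (phi z) 1%:M).
Proof.
move=> hC hphi hz; have [B hB] := hphi z hz.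
set G := col_mx (phi z) 1%:M.
pose y := fun i : 'I_m2 => G *m (delta_mx i 0 : 'cV[C]_m2).
have e : forall N, complex.Re (\tr (\sum_(k < N) weyl_term Cs (phi z) z k))
    = \sum_i \sum_(k < N) ss Cs z (y i) k.
  move=> N; rewrite /mxtrace raddf_sum /=; apply: eq_bigr => i _.
  rewrite summxE raddf_sum /=; apply: eq_bigr => k _.
  rewrite /weyl_term mxE qfunE -rmorphXn /= ReM_real /ss; congr (_ * _).
  have -> : adj (col_mx (phi z) 1%:M) *m adj (fundW Cs z k) = adj (fundW Cs z k *m G) by rewrite adjM.
  rewrite -[adj (fundW Cs z k *m G) *m Cs k *m fundW Cs z k *m G]mulmxA diag_entry.
  by rewrite /qf /y !mulmxA.
have hy : forall i, exists B, forall N, \sum_(k < N) ss Cs z (y i) k <= B.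
  move=> i; exists B => N.
  have := hB N; rewrite lecE => /andP[_]; rewrite e /= => h.
  apply: le_trans h; rewrite (bigD1 i) //= lerDl; apply: sumr_ge0 => j _.
  by apply: sumr_ge0 => k _; apply: ss_ge0; case: (hC k).
have hG : forall v, G *m v = \sum_i v i 0 *: y i.
  move=> v; rewrite {1}(matrix_sum_delta v) mulmx_sumr; apply: eq_bigr => i _.
  by rewrite big_ord1 -scalemxAr.
move=> v N; apply: bounded_disc => //; rewrite hG.
apply: (@sum_bound _ (fun N x => \sum_(k < N) ss Cs z x k)) => //.
- move=> M a b.
  have h1 : \sum_(k < M) ss Cs z (a + b) k + \sum_(k < M) ss Cs z (a - b) k
      = 2 * \sum_(k < M) ss Cs z a k + 2 * \sum_(k < M) ss Cs z b k.
    by rewrite -big_split !mulr_sumr -big_split; apply: eq_bigr => k _; apply: ss_par.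
  have h2 : 0 <= \sum_(k < M) ss Cs z (a - b) k.
    by apply: sumr_ge0 => k _; apply: ss_ge0; case: (hC k).
  lra.
- by move=> M a x; rewrite mulr_sumr; apply: eq_bigr => k _; apply: ss_scale.
Qed.


Lemma inj_unit k (A : 'M[C]_k) : (forall x : 'cV[C]_k, A *m x = 0 -> x = 0) -> A \in unitmx.
Proof.
move=> hA; rewrite unitmxE unitfE -det_tr; apply/negP => /det0P [v nz hv].
have : A *m v^T = 0 by rewrite -[A]trmxK -trmx_mul hv trmx0.
by move=> /hA /eqP; rewrite -trmx0 (inj_eq trmx_inj) (negbTE nz).
Qed.

Lemma qf_block k1 k2 (a : 'M[C]_k1) b c (d : 'M[C]_k2) x y :
  qf (block_mx a b c d) (col_mx x y) =
  complex.Re ((adj x *m a *m x + adj x *m b *m y + (adj y *m c *m x + adj y *m d *m y)) 0 0).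
Proof. by rewrite /qf adj_col mul_row_block mul_row_col !mulmxDl addrACA. Qed.

Lemma colJcol p q (x : 'M[C]_(m1, p)) (y : 'M[C]_(m2, p)) (x' : 'M[C]_(m1, q)) (y' : 'M[C]_(m2, q)) :
  adj (col_mx x y) *m J *m col_mx x' y' = adj x *m x' - adj y *m y'.
Proof.
rewrite adj_col /jmat mul_row_block !mulmx0 !addr0 !add0r !mulmx1 mulmxN.
by rewrite mul_row_col mulNmx mulmx1.
Qed.

Lemma qf_plus_ker k (M : 'M[C]_k) u g : M *m g = 0 -> adj g *m M = 0 -> qf M (u + g) = qf M u.
Proof.
move=> h1 h2; rewrite /qf adjD !mulmxDl !mulmxDr h2 !mul0mx.
by rewrite -(mulmxA (adj u) M g) h1 mulmx0 !addr0.

Qed.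


Section CM.
Variable C0 : 'M[C]_n.
Hypothesis hP : posdef C0.
Hypothesis hJ : C0 *m J *m C0 = J.

Local Notation a := (ulsubmx C0).
Local Notation b := (ursubmx C0).
Local Notation b2 := (dlsubmx C0).
Local Notation d := (drsubmx C0).

Lemma blockC : C0 = block_mx a b b2 d.
Proof. by rewrite submxK. Qed.

Lemma blockE : [/\ a *m a - b *m b2 = 1%:M, a *m b - b *m d = 0,
                  b2 *m a - d *m b2 = 0 & b2 *m b - d *m d = - 1%:M].
Proof.
have := hJ; rewrite {1 2}blockC /jmat mulmx_block !mulmx0 !addr0 !add0r !mulmx1 !mulmxN.
rewrite mulmx_block !mulNmx.
move/eq_block_mx => [h1 h2 h3 h4].
by split; [rewrite -h1 | rewrite -h2 | rewrite -h3 | rewrite -h4]; rewrite mulmx1.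
Qed.

Lemma ReN (x : C) : complex.Re (- x) = - complex.Re x.
Proof. by case: x. Qed.

Lemma ua : (a + 1%:M) \in unitmx.
Proof.
apply: inj_unit => x hx.
have ax : a *m x = - x by apply/eqP; rewrite -subr_eq0 opprK -{2}[x]mul1mx -mulmxDl hx.
have := qf_posdef (col_mx x 0) hP; rewrite {1}blockC qf_block adj0 !mulmx0 !mul0mx !addr0.
rewrite -mulmxA ax mulmxN mxE ReN oppr_ge0 => h.
exact: nrm2_eq0.
Qed.

Lemma ud : (d + 1%:M) \in unitmx.
Proof.
apply: inj_unit => x hx.
have ax : d *m x = - x by apply/eqP; rewrite -subr_eq0 opprK -{2}[x]mul1mx -mulmxDl hx.
have := qf_posdef (col_mx 0 x) hP; rewrite {1}blockC qf_block adj0 !mulmx0 !mul0mx !add0r.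
rewrite -mulmxA ax mulmxN mxE ReN oppr_ge0 => h.
exact: nrm2_eq0.
Qed.

Definition phi0 := - (invmx (a + 1%:M) *m b).
Definition psi0 := - (invmx (d + 1%:M) *m b2).

Lemma swapXb : invmx (a + 1%:M) *m b = b *m invmx (d + 1%:M).
Proof.
have [_ h2 _ _] := blockE.
have e : (a + 1%:M) *m b = b *m (d + 1%:M).
  by rewrite mulmxDl mulmxDr mul1mx mulmx1; apply/eqP; rewrite -subr_eq0 opprD addrACA h2 subrr addr0.
have -> : b *m invmx (d + 1%:M) = invmx (a + 1%:M) *m ((a + 1%:M) *m (b *m invmx (d + 1%:M))).
  by rewrite mulKmx // ua.
by rewrite mulmxA e -mulmxA mulmxV ?ud // mulmx1.
Qed.

Lemma CG : C0 *m col_mx phi0 1%:M = col_mx (- phi0) 1%:M.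
Proof.
have [_ _ _ h4] := blockE.
rewrite {1}blockC mul_block_col !mulmx1 /phi0 opprK; congr col_mx.
- set X := invmx (a + 1%:M) *m b.
  have -> : b = (a + 1%:M) *m X by rewrite /X mulKVmx // ua.
  by rewrite mulmxN mulmxDl mul1mx addrA addNr add0r.
- rewrite swapXb mulmxN mulmxA.
  have -> : b2 *m b = d *m d - 1%:M by rewrite -[b2 *m b](subrK (d *m d)) h4 addrC.
  have -> : d *m d - 1%:M = (d - 1%:M) *m (d + 1%:M).
    by rewrite mulmxBl mulmxDr mulmx1 mul1mx opprD addrA addrK.
  by rewrite (mulmxK ud) opprB subrK.
Qed.

Lemma CH : C0 *m col_mx 1%:M psi0 = col_mx 1%:M (- psi0).
Proof.
have [h1 _ _ _] := blockE.
rewrite {1}blockC mul_block_col !mulmx1 /psi0 opprK; congr col_mx.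
- rewrite mulmxN mulmxA -swapXb -mulmxA.
  have -> : b *m b2 = a *m a - 1%:M by rewrite -h1 opprB addrC subrK.
  have -> : a *m a - 1%:M = (a + 1%:M) *m (a - 1%:M).
    by rewrite mulmxDl mulmxBr mulmx1 mul1mx addrA subrK.
  by rewrite (mulKmx ua) opprB addrC subrK.
- set Y := invmx (d + 1%:M) *m b2.
  have -> : b2 = (d + 1%:M) *m Y by rewrite /Y mulKVmx // ud.
  by rewrite mulmxN mulmxDl mul1mx addrC addrA addNr add0r.
Qed.

Lemma hermC : adj C0 = C0. Proof. by case: hP. Qed.

Lemma JH p (x : 'M[C]_(m1, p)) (y : 'M[C]_(m2, p)) : J *m col_mx x y = col_mx x (- y).
Proof. by rewrite /jmat mul_block_col !mul0mx !mul1mx addr0 add0r mulNmx mul1mx. Qed.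

Lemma psi0E : psi0 = adj phi0.
Proof.
have e1 : adj (col_mx phi0 1%:M) *m C0 *m col_mx 1%:M psi0 = adj phi0 - psi0.
  by rewrite -mulmxA CH adj_col mul_row_col mulmx1 adj1 mul1mx.
have e2 : adj (col_mx phi0 1%:M) *m C0 *m col_mx 1%:M psi0 = - (adj phi0 - psi0).
  by rewrite -hermC -adjM CG adj_col mul_row_col mulmx1 adj1 mul1mx adjN opprB addrC.
have := etrans (esym e1) e2.
set Z := adj phi0 - psi0 => hZ.
have Z0 : Z = 0.
  have : (2%:R : C) *: Z == 0 by rewrite scaler_nat mulr2n {1}hZ addNr.
  by rewrite scalemx_eq0 pnatr_eq0 /= => /eqP.
by apply/eqP; rewrite eq_sym -subr_eq0 -/Z Z0.
Qed.

Lemma uK : (1%:M - phi0 *m psi0) \in unitmx.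
Proof.
apply: inj_unit => x hx.
set H := col_mx 1%:M psi0.
have e : adj H *m C0 *m H = 1%:M - phi0 *m psi0.
  by rewrite -mulmxA CH -JH mulmxA colJcol adj1 mul1mx {1}psi0E adjK.
have hq : qf C0 (H *m x) = 0.
  by rewrite -qf_adj e /qf -mulmxA hx mulmx0 mxE.
have hHx : H *m x = 0.
  by apply/eqP; apply/negPn/negP => nz; have := qf_posdef_gt0 hP nz; rewrite hq ltxx.
have := congr1 usubmx hHx; rewrite /H mul_col_mx col_mxKu mul1mx => ->.
by apply/matrixP=> i j; rewrite !mxE.
Qed.

End CM.

Lemma kill (p : nat) (X : 'M[C]_(p, m1)) (P : 'M[C]_(m1, m2)) (Q : 'M[C]_(m2, m1)) (Y : 'M[C]_(p, m2)) :
  (1%:M - P *m Q) \in unitmx -> X *m P + Y = 0 -> X + Y *m Q = 0 -> X = 0 /\ Y = 0.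
Proof.
move=> hu h1 h2.
have eY : Y = - (X *m P) by apply/eqP; rewrite -addr_eq0 addrC h1.
have hX : X *m (1%:M - P *m Q) = 0 by rewrite mulmxBr mulmx1 mulmxA -mulNmx -eY h2.
have X0 : X = 0 by rewrite -[X](mulmxK hu) hX mul0mx.
by split => //; rewrite eY X0 mul0mx oppr0.
Qed.

Lemma C_unique (C0 C1 : 'M[C]_n) : posdef C0 -> C0 *m J *m C0 = J ->
  posdef C1 -> C1 *m J *m C1 = J -> phi0 C0 = phi0 C1 -> C0 = C1.
Proof.
move=> hP0 hJ0 hP1 hJ1 e.
have G0 := CG hP0 hJ0; have G1 := CG hP1 hJ1; rewrite -e in G1.
have H0 := CH hP0 hJ0; have H1 := CH hP1 hJ1.
have hpsi : psi0 C1 = psi0 C0 by rewrite (psi0E hP1 hJ1) (psi0E hP0 hJ0) e.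
rewrite hpsi in H1.
have hu := uK hP0 hJ0.
set D := C0 - C1.
have DG : D *m col_mx (phi0 C0) 1%:M = 0 by rewrite /D mulmxBl G0 G1 subrr.
have DH : D *m col_mx 1%:M (psi0 C0) = 0 by rewrite /D mulmxBl H0 H1 subrr.
rewrite (blockC D) !mul_block_col !mulmx1 in DG DH.
move/eqP: DG; rewrite col_mx_eq0 => /andP[/eqP g1 /eqP g2].
move/eqP: DH; rewrite col_mx_eq0 => /andP[/eqP k1 /eqP k2].
have [p0 r0] := kill hu g1 k1.
have [q0 s0] := kill hu g2 k2.
apply/eqP; rewrite -subr_eq0 -/D (blockC D) p0 r0 q0 s0.
by rewrite block_mx0.
Qed.

Lemma tt1E (Cs : nat -> 'M[C]_n) z w : adj (Cs 0%N) = Cs 0%N -> Cs 0%N *m J *m Cs 0%N = J ->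
  tt Cs z w 1 = qf J w + cc z * qf (Cs 0%N) w.
Proof.
move=> hH hJ; rewrite tt_step // /tt /ss expr0 !mul1r fundW0 mul1mx //.
Qed.

Lemma nrm20 k : nrm2 (0 : 'cV[C]_k) = 0.
Proof. by rewrite -qf1 qf0. Qed.

Lemma estimate (C0 : 'M[C]_n) z (Phi : 'M[C]_(n, m2)) v :
  posdef C0 -> C0 *m J *m C0 = J -> 0 <= cc z -> cc z <= 1 ->
  qf J (Phi *m v) + cc z * qf C0 (Phi *m v) <= 0 ->
  2 * cc z * nrm2 (usubmx Phi *m v - phi0 C0 *m (dsubmx Phi *m v))
    <= (1 - cc z) * nrm2 (dsubmx Phi *m v).
Proof.
move=> hP hJ c0 c1 hyp.
set w := Phi *m v.
set x := usubmx Phi *m v - phi0 C0 *m (dsubmx Phi *m v).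
set G := col_mx (phi0 C0) (1%:M : 'M[C]_m2).
have ew : w = col_mx (usubmx Phi *m v) (dsubmx Phi *m v) by rewrite /w -{1}(vsubmxK Phi) mul_col_mx.
have eu : w = col_mx x 0 + G *m (dsubmx Phi *m v).
  by rewrite ew /G mul_col_mx mul1mx add_col_mx add0r /x subrK.
set M := J + C0.
have MG : M *m G = 0.
  by rewrite /M mulmxDl JH (CG hP hJ) add_col_mx addrN addNr col_mx0.
have Mh : adj M = M by rewrite /M adjD adjJ (hermC hP).
have k1 : M *m (G *m (dsubmx Phi *m v)) = 0 by rewrite mulmxA MG mul0mx.
have k2 : adj (G *m (dsubmx Phi *m v)) *m M = 0 by rewrite -Mh -adjM k1 adj0.
have hM : qf M w = qf M (col_mx x 0) by rewrite eu qf_plus_ker.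
have h1 : 2 * nrm2 x <= qf J w + qf C0 w.
  rewrite -qfD -/M hM qfD; have := CgeJ (col_mx x 0) hP hJ.
  rewrite qfJ nrm20 subr0; exact: rl2.
have h2 : - nrm2 (dsubmx Phi *m v) <= qf J w.
  rewrite ew qfJ; apply: rl3; exact: nrm2_ge0.
exact: rl4 c0 c1 h1 h2 hyp.
Qed.

Lemma one_sub_sq_neq0 (z : C) : complex.Im z < 0 -> complex.Im z != -1 ->
  1 - ('i * z) * ('i * z) != 0.
Proof.
case: z => x y /= hy hy1; apply/negP => /eqP h.
have /eqP := congr1 (@complex.Re R) h; have /eqP := congr1 (@complex.Im R) h.
rewrite /= => /eqP hI /eqP hR.
have hxy : x * y = 0 by nra.
have hx : x = 0.
  by move/eqP: hxy; rewrite mulf_eq0 => /orP[/eqP//|/eqP hy0]; move: hy; rewrite hy0 ltxx.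
rewrite hx in hR.
have : (y + 1) * (y - 1) = 0 by nra.
move/eqP; rewrite mulf_eq0 => /orP[/eqP h1|/eqP h1].
  have ey : y = -1 by lra.
  by move: hy1; rewrite ey eqxx.
lra.
Qed.

Lemma A_inj (C0 : 'M[C]_n) z : C0 *m J *m C0 = J -> complex.Im z < 0 -> complex.Im z != -1 ->
  forall w : 'cV[C]_n, Amat C0 z *m w = 0 -> w = 0.
Proof.
move=> hJ hz hz1 w hw.
set a := 'i * z.
have XX : (J *m C0) *m (J *m C0) = 1%:M by rewrite mulmxA -(mulmxA J C0 J) -(mulmxA J) hJ JJ.
have e : (1%:M - a *: (J *m C0)) *m Amat C0 z = (1 - a * a) *: 1%:M.
  rewrite /Amat -/a mulmxBl mul1mx mulmxDr mulmx1 -!scalemxAl -!scalemxAr XX scalerA.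
  by rewrite scalerBl scale1r opprD addrA addrK.
have : (1 - a * a) *: w == 0 by rewrite -[w]mul1mx scalemxAl -e -mulmxA hw mulmx0.
rewrite scalemx_eq0 (negbTE (one_sub_sq_neq0 hz hz1)) /=; by move/eqP.
Qed.

Lemma inj_step (Cs : nat -> 'M[C]_n) z Phi : dirac_potential Cs -> Disc Cs z Phi ->
  complex.Im z < 0 -> complex.Im z != -1 ->
  (forall v : 'cV[C]_m2, dsubmx Phi *m v = 0 -> v = 0) ->
  forall v : 'cV[C]_m2, dsubmx (Amat (Cs 0%N) z *m Phi) *m v = 0 -> v = 0.
Proof.
move=> hC hD hz hz1 hinj v hv.
set w := Phi *m v.
have ew : Amat (Cs 0%N) z *m w = col_mx (usubmx (Amat (Cs 0%N) z *m Phi) *m v) 0.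
  by rewrite /w mulmxA -{1}(vsubmxK (Amat (Cs 0%N) z *m Phi)) mul_col_mx hv.
have := hD v 1%N; rewrite /tt fundWS fundW0 mulmx1 expr1 -/w ew qfJ nrm20 subr0.
rewrite pmulr_rle0 ?qr_gt0 // => /nrm2_eq0 x0.
have w0 : w = 0.
  have [_ hJ] := hC 0%N; apply: (A_inj hJ hz hz1); by rewrite ew x0 col_mx0.
apply: hinj; have := w0; rewrite /w -{1}(vsubmxK Phi) mul_col_mx.
by move/eqP; rewrite col_mx_eq0 => /andP[_ /eqP].
Qed.

Lemma final_real (D E : R) : (forall s, 0 < s -> s != 1 -> s * D <= (1 - s) ^+ 2 * E) ->
  0 <= D -> 0 <= E -> D = 0.
Proof.
move=> h D0 E0; apply/eqP; rewrite eq_le D0 andbT leNgt; apply/negP => Dp.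
have K0 : 0 < D + E + 1 by lra.
set d := D / (D + E + 1).
have hd : d * (D + E + 1) = D by rewrite /d mulfVK //; apply: lt0r_neq0.
have d0 : 0 < d by rewrite /d divr_gt0.
have d1 : d < 1 by rewrite /d ltr_pdivrMr //; lra.
have n1 : (1 + d != 1) by apply/negP => /eqP h1; lra.
have p1 : 0 < 1 + d by lra.
have hs := h (1 + d) p1 n1.
have e1 : (1 - (1 + d)) ^+ 2 = d ^+ 2 by rewrite opprD addrA subrr sub0r sqrrN.
rewrite e1 in hs.
have dD : 0 < d * D + d by apply: addr_gt0 => //; apply: mulr_gt0.
rewrite !mulrDr mulr1 in hd.
have hE : d * E < D by lra.
have h2 : 0 <= (d - d ^+ 2) * E.
  apply: mulr_ge0 => //; rewrite expr2 -{1}[d]mulr1 -mulrBr; apply: mulr_ge0; lra.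
rewrite mulrBl in h2; rewrite mulrDl mul1r in hs.
have : 0 <= d * D by apply: mulr_ge0; lra.
lra.
Qed.

Lemma nrm2_sub_le k (a b : 'cV[C]_k) : nrm2 (a - b) <= 2 * nrm2 a + 2 * nrm2 b.
Proof. have := qf_par 1%:M a b; have := nrm2_ge0 (a + b); rewrite !qf1; lra. Qed.

Definition zs (s : R) : C := Complex 0 (- s).

Lemma cc_zs s : cc (zs s) * (1 + s ^+ 2) = 2 * s.
Proof.
rewrite /cc /zs /qr /=; have h : 1 + 0 ^+ 2 + (- s) ^+ 2 = 1 + s ^+ 2 by rewrite expr0n addr0 sqrrN.
rewrite h divfK; first ring.
apply: lt0r_neq0; have := sqr_ge0 s; lra.
Qed.

Lemma cc_zs_bounds s : 0 < s -> 0 <= cc (zs s) /\ cc (zs s) <= 1.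
Proof.
move=> s0; have h := cc_zs s; have K : 0 < 1 + s ^+ 2 by have := sqr_ge0 s; lra.
have hq : 0 < cc (zs s) by apply: cc_gt0; rewrite /zs /=; lra.
split; first exact: ltW.
have : cc (zs s) * (1 + s ^+ 2) <= 1 * (1 + s ^+ 2) by rewrite h mul1r; have := sqr_ge0 (s - 1); nra.
by rewrite ler_pM2r.
Qed.

Lemma phi0_eq (C0 C1 : 'M[C]_n) : posdef C0 -> C0 *m J *m C0 = J ->
  posdef C1 -> C1 *m J *m C1 = J ->
  (forall s, 0 < s -> s != 1 -> exists Phi : 'M[C]_(n, m2),
     [/\ forall v : 'cV[C]_m2, dsubmx Phi *m v = 0 -> v = 0,
         forall v, qf J (Phi *m v) + cc (zs s) * qf C0 (Phi *m v) <= 0 &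
         forall v, qf J (Phi *m v) + cc (zs s) * qf C1 (Phi *m v) <= 0]) ->
  phi0 C0 = phi0 C1.
Proof.
move=> hP0 hJ0 hP1 hJ1 hyp.
suff h : forall e : 'cV[C]_m2, (phi0 C0 - phi0 C1) *m e = 0.
  apply/eqP; rewrite -subr_eq0; apply/eqP/matrixP => i j.
  have := h (delta_mx j 0); rewrite -colE => /matrixP /(_ i 0); rewrite !mxE => hh.
  exact: hh.
move=> e; apply: nrm2_eq0.
suff -> : nrm2 ((phi0 C0 - phi0 C1) *m e) = 0 by [].
apply: (@final_real _ (nrm2 e)); last 2 first.
- exact: nrm2_ge0.
- exact: nrm2_ge0.
move=> s s0 s1.
have [Phi [hinj h0 h1]] := hyp s s0 s1.
have hu : dsubmx Phi \in unitmx by apply: inj_unit.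
set v := invmx (dsubmx Phi) *m e.
have hv : dsubmx Phi *m v = e by rewrite /v mulKVmx.
have [c0 c1] := cc_zs_bounds s0.
have E0 := estimate hP0 hJ0 c0 c1 (h0 v); have E1 := estimate hP1 hJ1 c0 c1 (h1 v).
rewrite hv in E0 E1.
set x0 := usubmx Phi *m v - phi0 C0 *m e in E0.
set x1 := usubmx Phi *m v - phi0 C1 *m e in E1.
have ex : (phi0 C0 - phi0 C1) *m e = x1 - x0.
  rewrite /x0 /x1 mulmxBl; move: (usubmx Phi *m v) (phi0 C0 *m e) (phi0 C1 *m e) => p a' b'.
  by apply/matrixP=> i j; rewrite !mxE; ring.
rewrite ex.
have Hs := nrm2_sub_le x1 x0.
have hK := cc_zs s.
have K0 := rl7 s.
have F0 := rl5 K0 hK erefl E0.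
have F1 := rl5 K0 hK erefl E1.
exact: rl6 s0 Hs F0 F1.
Qed.

Definition Inv (Cs Cs' : nat -> 'M[C]_n) (Phi : C -> 'M[C]_(n, m2)) :=
  forall z, complex.Im z < 0 -> complex.Im z != -1 ->
   [/\ Disc Cs z (Phi z), Disc Cs' z (Phi z) &
       forall v : 'cV[C]_m2, dsubmx (Phi z) *m v = 0 -> v = 0].

Lemma C0_eq (Cs Cs' : nat -> 'M[C]_n) Phi : dirac_potential Cs -> dirac_potential Cs' ->
  Inv Cs Cs' Phi -> Cs 0%N = Cs' 0%N.
Proof.
move=> hC hC' hI; have [hP0 hJ0] := hC 0%N; have [hP1 hJ1] := hC' 0%N.
apply: (C_unique hP0 hJ0 hP1 hJ1); apply: (phi0_eq hP0 hJ0 hP1 hJ1) => s s0 s1.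
have hz : complex.Im (zs s) < 0 by rewrite /zs /= oppr_lt0.
have hz1 : complex.Im (zs s) != -1 by rewrite /zs /= eqr_opp.
have [d0 d1 hinj] := hI _ hz hz1.
exists (Phi (zs s)); split => // v.
- by have := d0 v 1%N; rewrite tt1E //; case: hP0.
- by have := d1 v 1%N; rewrite tt1E //; case: hP1.
Qed.

Lemma Inv_shift (Cs Cs' : nat -> 'M[C]_n) Phi : dirac_potential Cs -> dirac_potential Cs' ->
  Inv Cs Cs' Phi -> Cs 0%N = Cs' 0%N ->
  Inv (fun k => Cs k.+1) (fun k => Cs' k.+1) (fun z => Amat (Cs 0%N) z *m Phi z).
Proof.
move=> hC hC' hI e z hz hz1; have [d0 d1 hinj] := hI z hz hz1; split.
- exact: Disc_shift.
- rewrite e; exact: Disc_shift.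
- exact: (inj_step hC d0 hz hz1 hinj).
Qed.

Lemma main_ind k : forall (Cs Cs' : nat -> 'M[C]_n) Phi,
  dirac_potential Cs -> dirac_potential Cs' -> Inv Cs Cs' Phi -> Cs k = Cs' k.
Proof.
elim: k => [|k IH] Cs Cs' Phi hC hC' hI; first exact: C0_eq hC hC' hI.
have e := C0_eq hC hC' hI.
exact: (IH (fun k => Cs k.+1) (fun k => Cs' k.+1) _ (fun k => hC k.+1) (fun k => hC' k.+1)
          (Inv_shift hC hC' hI e)).
Qed.

End Main.

Theorem theorem2p3 (R : realType) (m1 m2 : nat) (hm1 : (0 < m1)%N) (hm2 : (0 < m2)%N)
  (Cs Cs' : nat -> 'M[R[i]]_(m1 + m2))
  (hC : dirac_potential Cs) (hC' : dirac_potential Cs')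
  (phi : R[i] -> 'M[R[i]]_(m1, m2))
  (hphi : is_weyl_function Cs phi) (hphi' : is_weyl_function Cs' phi) :
  forall k : nat, Cs k = Cs' k.
Proof.
move=> k; apply: (@main_ind R m1 m2 k Cs Cs' (fun z => col_mx (phi z) 1%:M) hC hC').
move=> z hz hz1; split.
- exact: top_disc.
- exact: top_disc.
- by move=> v; rewrite col_mxKd mul1mx.
Qed.
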